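(* Let $M$ be a nondegenerate $R$-lattice that is primitively $n$-universal. Then the Witt index of the quadratic space $FM$ satisfies $\operatorname{ind} FM \ge n$. In particular, $u^\ast_R(n) \ge 2n$.
   Context: $F$ is a nonarchimedean local field of characteristic not $2$ with ring of integers $R$. An $R$-lattice is a finitely generated $R$-submodule $L$ of a quadratic space $(V,B)$ over $F$, assumed integral ($B(L,L)\subseteq R$); $FL$ denotes the $F$-space spanned by $L$. A representation of $L$ into $M$ is an $R$-linear map preserving $B$; it is primitive if its image is a direct summand of $M$. An $R$-lattice is primitively $n$-universal if it primitively represents every $R$-lattice of rank $n$. The Witt index $\operatorname{ind} V$ of a nondegenerate space is the dimension of a maximal totally isotropic subspace. $u^\ast_R(n)$ is the minimal rank of a primitively $n$-universal $R$-lattice. *)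

(* Defs.v *)
From HB Require Import structures.
From mathcomp Require Import all_boot all_order all_algebra.
From mathcomp Require Import boolp.
Set Implicit Arguments. Unset Strict Implicit. Unset Printing Implicit Defensive.
Import Order.TTheory GRing.Theory Num.Theory.
Local Open Scope ring_scope.

Section LocalField.
Variable F : fieldType.
(* v is a normalized discrete valuation on F^x (its value at 0 is irrelevant). *)
Variable v : F -> int.

Definition discrete_valuation : Prop :=
  [/\ (forall x y : F, x != 0 -> y != 0 -> v (x * y) = v x + v y),
      (forall x y : F, x != 0 -> y != 0 -> x + y != 0 ->
          (v x <= v (x + y)) || (v y <= v (x + y)))
    & (exists pi : F, pi != 0 /\ v pi = 1)].

Definition vring : pred F := fun x => (x == 0) || (0 <= v x).

Definition vsmall (e : int) (x : F) : Prop := x = 0 \/ e <= v x.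

Definition vcomplete : Prop :=
  forall a : nat -> F,
    (forall e : int, exists N : nat, forall p q, (N <= p)%N -> (N <= q)%N ->
        vsmall e (a p - a q)) ->
    exists l : F, forall e : int, exists N : nat, forall p, (N <= p)%N ->
        vsmall e (a p - l).

Definition finite_residue_field : Prop :=
  exists s : seq F, all vring s /\
    forall x, x \in vring -> exists2 y, y \in s & vsmall 1 (x - y).

Definition nonarch_local_field : Prop :=
  [/\ discrete_valuation, vcomplete & finite_residue_field].
End LocalField.

Section Lattices.
Variable F : fieldType.
Variable v : F -> int.

(* A quadratic space of dimension m over F: 'rV[F]_m with the symmetric
   bilinear form B(x,y) = x G y^T, G^T = G. *)
Definition bform m (G : 'M[F]_m) (x y : 'rV[F]_m) : F := (x *m G *m y^T) 0 0.

Definition lattice k m (A : 'M[F]_(k, m)) (x : 'rV[F]_m) : Prop :=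
  exists u : 'rV[F]_k, (forall i, u 0 i \in vring v) /\ x = u *m A.

(* rank of the lattice = dim F L = rank of A *)
Definition lrank k m (A : 'M[F]_(k, m)) : nat := \rank A.

Definition integral_lattice m (G : 'M[F]_m) k (A : 'M[F]_(k, m)) : Prop :=
  forall x y, lattice A x -> lattice A y -> bform G x y \in vring v.

Definition nondeg_lattice m (G : 'M[F]_m) k (A : 'M[F]_(k, m)) : Prop :=
  forall x : 'rV[F]_m, (x <= A)%MS ->
    (forall y : 'rV[F]_m, (y <= A)%MS -> bform G x y = 0) -> x = 0.

Definition rsubmodule m (N : 'rV[F]_m -> Prop) : Prop :=
  [/\ N 0, (forall x y, N x -> N y -> N (x + y))
    & (forall a x, a \in vring v -> N x -> N (a *: x))].

Definition direct_summand m (S M : 'rV[F]_m -> Prop) : Prop :=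
  exists N : 'rV[F]_m -> Prop,
    [/\ rsubmodule N, (forall x, N x -> M x),
        (forall x, M x -> exists a b, [/\ S a, N b & x = a + b])
      & (forall x, S x -> N x -> x = 0)].

Definition representation m' (G' : 'M[F]_m') k' (A : 'M[F]_(k', m'))
    m (G : 'M[F]_m) k (C : 'M[F]_(k, m)) (f : 'rV[F]_m' -> 'rV[F]_m) : Prop :=
  [/\ (forall x, lattice A x -> lattice C (f x)),
      (forall x y, lattice A x -> lattice A y -> f (x + y) = f x + f y),
      (forall a x, a \in vring v -> lattice A x -> f (a *: x) = a *: f x)
    & (forall x y, lattice A x -> lattice A y -> bform G (f x) (f y) = bform G' x y)].

Definition image_on m' m (L : 'rV[F]_m' -> Prop) (f : 'rV[F]_m' -> 'rV[F]_m)
  (y : 'rV[F]_m) : Prop := exists2 x, L x & y = f x.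

Definition prim_represents m' (G' : 'M[F]_m') k' (A : 'M[F]_(k', m'))
    m (G : 'M[F]_m) k (C : 'M[F]_(k, m)) : Prop :=
  exists f, representation G' A G C f /\
            direct_summand (image_on (lattice A) f) (lattice C).

Definition prim_n_universal (n : nat) m (G : 'M[F]_m) k (C : 'M[F]_(k, m)) : Prop :=
  forall m' (G' : 'M[F]_m') k' (A : 'M[F]_(k', m')),
    G'^T = G' -> integral_lattice G' A -> lrank A = n ->
    prim_represents G' A G C.
End Lattices.

(* Witt index of the space FM = rowspace of C with form G: the largest
   dimension of a totally isotropic subspace (represented as the row space
   of a square matrix W). *)
Definition witt_index (F : fieldType) m (G : 'M[F]_m) k (C : 'M[F]_(k, m)) : nat :=
  \max_(d < m.+1 | `[< exists W : 'M[F]_m,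
          [/\ (W <= C)%MS, W *m G *m W^T = 0 & \rank W = d] >]) d.

(* Main.v *)
Require Import Defs.
From HB Require Import structures.
From mathcomp Require Import all_boot all_order all_algebra boolp.
From mathcomp Require Import zify ring lra.
Import Order.TTheory GRing.Theory Num.Theory.
Set Implicit Arguments. Unset Strict Implicit.
Local Open Scope ring_scope.

Section Val.
Variables (F : fieldType) (v : F -> int).
Hypothesis vM : forall {x y : F}, x != 0 -> y != 0 -> v (x * y) = v x + v y.
Hypothesis vD : forall {x y : F}, x != 0 -> y != 0 -> x + y != 0 ->
          (v x <= v (x + y)) || (v y <= v (x + y)).
Variables (pi : F) (pi0 : pi != 0) (vpi : v pi = 1).

Lemma v1 : v 1 = 0.
Proof. have := vM (oner_neq0 F) (oner_neq0 F); rewrite mulr1 => h. by apply/(addrI (v 1)); rewrite addr0 -h. Qed.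

Lemma vN1 : v (-1) = 0.
Proof.
have h : (-1 : F) != 0 by rewrite oppr_eq0 oner_neq0.
have := vM h h; rewrite mulrNN mulr1 v1; lia.
Qed.

Lemma vN x : v (- x) = v x.
Proof.
have [->|x0] := eqVneq x 0; first by rewrite oppr0.
have h : (-1 : F) != 0 by rewrite oppr_eq0 oner_neq0.
by rewrite -mulN1r vM // vN1 add0r.
Qed.

Lemma vV x : x != 0 -> v (x^-1) = - v x.
Proof.
move=> x0; have := vM x0 (invr_neq0 x0); rewrite mulfV // v1; lia.
Qed.

Lemma vXpi (j : nat) : v (pi ^+ j) = j%:Z.
Proof.
elim: j => [|j IH]; first by rewrite expr0 v1.
rewrite exprS vM ?expf_neq0 // IH vpi; lia.
Qed.

Lemma vsmall0 e : vsmall v e 0. Proof. by left. Qed.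

Lemma vsmallD e x y : vsmall v e x -> vsmall v e y -> vsmall v e (x + y).
Proof.
case=> [->|hx]; first by rewrite add0r.
case=> [->|hy]; first by rewrite addr0 /vsmall; right.
have [x0|x0] := eqVneq x 0; first by rewrite x0 add0r; right.
have [y0|y0] := eqVneq y 0; first by rewrite y0 addr0; right.
have [s0|s0] := eqVneq (x + y) 0; first by left.
right; have := vD x0 y0 s0; case/orP => h.
- exact: le_trans hx h.
- exact: le_trans hy h.
Qed.

Lemma vsmallN e x : vsmall v e x -> vsmall v e (- x).
Proof. by case=> [->|h]; [left; rewrite oppr0|right; rewrite vN]. Qed.

Lemma vsmallB e x y : vsmall v e x -> vsmall v e y -> vsmall v e (x - y).
Proof. by move=> hx hy; apply: vsmallD => //; apply: vsmallN. Qed.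

Lemma vsmallW e e' x : e' <= e -> vsmall v e x -> vsmall v e' x.
Proof. by move=> le [->|h]; [left|right; apply: le_trans h]. Qed.

Lemma vsmallM e e' x y : vsmall v e x -> vsmall v e' y -> vsmall v (e + e') (x * y).
Proof.
case=> [->|hx]; first by rewrite mul0r; left.
case=> [->|hy]; first by rewrite mulr0; left.
have [x0|x0] := eqVneq x 0; first by rewrite x0 mul0r; left.
have [y0|y0] := eqVneq y 0; first by rewrite y0 mulr0; left.
right; rewrite vM //; exact: lerD.
Qed.

Lemma vringE x : (x \in vring v) <-> vsmall v 0 x.
Proof.
rewrite /vsmall unfold_in /vring; split.
  by case/orP => [/eqP|]; [left|right].
by case=> [->|h]; rewrite ?eqxx // h orbT.
Qed.

Lemma vring_small e x : 0 <= e -> vsmall v e x -> x \in vring v.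
Proof. by move=> e0 h; apply/vringE; apply: vsmallW h. Qed.

Lemma vringD x y : x \in vring v -> y \in vring v -> x + y \in vring v.
Proof. by move=> /vringE hx /vringE hy; apply/vringE; apply: vsmallD. Qed.
Lemma vringN x : x \in vring v -> - x \in vring v.
Proof. by move=> /vringE hx; apply/vringE; apply: vsmallN. Qed.
Lemma vringB x y : x \in vring v -> y \in vring v -> x - y \in vring v.
Proof. by move=> hx hy; apply: vringD => //; apply: vringN. Qed.
Lemma vringM x y : x \in vring v -> y \in vring v -> x * y \in vring v.
Proof. by move=> /vringE hx /vringE hy; apply/vringE; have := vsmallM hx hy; rewrite addr0. Qed.
Lemma vring0 : 0 \in vring v. Proof. by apply/vringE; left. Qed.
Lemma vring1 : 1 \in vring v. Proof. by apply/vringE; right; rewrite v1. Qed.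
Lemma vringpi : pi \in vring v. Proof. by apply/vringE; right; rewrite vpi. Qed.
Lemma vringX x (j : nat) : x \in vring v -> x ^+ j \in vring v.
Proof. by move=> h; elim: j => [|j IH]; rewrite ?expr0 ?vring1 // exprS vringM. Qed.

Lemma vsmall_ring_mul e x r : vsmall v e x -> r \in vring v -> vsmall v e (r * x).
Proof. by move=> hx /vringE hr; have := vsmallM hr hx; rewrite add0r. Qed.

Lemma vsmall_pi (j : nat) x : vsmall v j%:Z x <-> exists2 r, r \in vring v & x = pi ^+ j * r.
Proof.
have pj0 : pi ^+ j != 0 by rewrite expf_neq0.
split.
  case=> [->|h]; first by exists 0; rewrite ?vring0 ?mulr0.
  have [x0|x0] := eqVneq x 0; first by exists 0; rewrite ?vring0 ?mulr0.
  exists (pi ^- j * x); last by rewrite mulrA mulfV // mul1r.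
  apply/vringE; right; rewrite vM ?invr_neq0 // vV // vXpi; lia.
case=> r hr ->; rewrite mulrC; apply: vsmall_ring_mul => //.
by right; rewrite vXpi.
Qed.

Lemma vsmall_pi_mul (j : nat) x : x \in vring v -> vsmall v j%:Z (pi ^+ j * x).
Proof. by move=> h; apply/vsmall_pi; exists x. Qed.

Lemma vsmall_all x : (forall j : nat, vsmall v j%:Z x) -> x = 0.
Proof.
move=> h; have [//|x0] := eqVneq x 0.
case: (h (absz (v x + 1))) => // hv; exfalso; move: hv; lia.
Qed.


Hypothesis Hres : finite_residue_field v.
Hypothesis Hcomp : vcomplete v.

Lemma reps (j : nat) : exists s : seq F, all (vring v) s /\
  forall x, x \in vring v -> exists2 y, y \in s & vsmall v j%:Z (x - y).
Proof.
elim: j => [|j [sj [hsj Hsj]]].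
  exists [:: 0]; split; first by rewrite /= andbT; apply: vring0.
  by move=> x hx; exists 0; rewrite ?mem_seq1 // subr0; apply/vringE.
case: Hres => s [hs Hs].
exists [seq a + pi ^+ j * d | a <- sj, d <- s]; split.
  apply/allP => z /allpairsP [[a d] [/= ha hd ->]].
  apply: vringD; first exact: (allP hsj).
  by apply: vringM; [apply: vringX; apply: vringpi|exact: (allP hs)].
move=> x hx; case: (Hsj x hx) => a ha /(vsmall_pi) [r hr exr].
case: (Hs r hr) => d hd hrd.
exists (a + pi ^+ j * d); first by apply: (allpairs_f (fun a d => a + pi ^+ j * d)).
have -> : x - (a + pi ^+ j * d) = pi ^+ j * (r - d).
  by rewrite mulrBr -exr; ring.
have := vsmallM (vsmall_pi_mul j vring1) hrd.
by rewrite mulr1 (_ : j%:Z + 1 = j.+1%:Z) //; lia.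
Qed.

Lemma pigeon (T : finType) (Q : T -> nat -> Prop) :
  (forall N, exists t, (N <= t)%N /\ exists g, Q g t) ->
  exists g, forall N, exists t, (N <= t)%N /\ Q g t.
Proof.
move=> H; apply: contrapT => H1.
have : forall g, exists N, forall t, (N <= t)%N -> ~ Q g t.
  move=> g; apply: contrapT => H2; apply: H1; exists g => N.
  apply: contrapT => H3; apply: H2; exists N => t Nt Qt; apply: H3; exists t; exact: (conj Nt Qt).
case/fin_all_exists => Nf HN.
case: (H (\max_g Nf g)) => t [Nt [g Qg]].
apply: (HN g t) => //; exact: leq_trans (leq_bigmax g) Nt.
Qed.

Definition close n k (j : nat) (A B : 'M[F]_(n, k)) :=
  forall i l, vsmall v j%:Z (A i l - B i l).

Lemma close_trans n k j (A B C : 'M[F]_(n, k)) : close j A B -> close j B C -> close j A C.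
Proof.
move=> h1 h2 i l; have -> : A i l - C i l = (A i l - B i l) + (B i l - C i l) by ring.
exact: vsmallD.
Qed.

Lemma close_sym n k j (A B : 'M[F]_(n, k)) : close j A B -> close j B A.
Proof. by move=> h i l; rewrite -opprB; apply: vsmallN. Qed.

Lemma close_W n k j j' (A B : 'M[F]_(n, k)) : (j' <= j)%N -> close j A B -> close j' A B.
Proof. by move=> le h i l; apply: vsmallW (h i l); rewrite lez_nat. Qed.

Lemma limit_point n k (U : nat -> 'M[F]_(n, k))
  (hU : forall t i l, U t i l \in vring v) :
  exists w : 'M_(n, k), (forall i l, w i l \in vring v) /\
    forall j N : nat, exists t, (N <= t)%N /\ close j (U t) w.
Proof.
pose P j (c : 'M[F]_(n, k)) := (forall i l, c i l \in vring v) /\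
   forall N, exists t, (N <= t)%N /\ close j (U t) c.
have step : forall j c, P j c -> exists c', P j.+1 c' /\ close j c c'.
  move=> j c [hc Hc].
  case: (reps j.+1) => sj [hsj Hsj].
  pose rep (g : {ffun 'I_n * 'I_k -> 'I_(size sj)}) : 'M[F]_(n, k) :=
    \matrix_(i, l) nth 0 sj (g (i, l)).
  have : exists g, forall N, exists t, (N <= t)%N /\
      (close j (U t) c /\ close j.+1 (U t) (rep g)).
    apply: pigeon => N; case: (Hc N) => t [Nt ct]; exists t; split => //.
    have : forall p : 'I_n * 'I_k, exists o : 'I_(size sj),
        vsmall v j.+1%:Z (U t p.1 p.2 - nth 0 sj o).
      move=> [i l]; case: (Hsj _ (hU t i l)) => y ys hy.
      by exists (Ordinal (introT idP (etrans (index_mem y sj) ys))); rewrite /= nth_index.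
    case/fin_all_exists => g hg; exists (finfun g); split => // i l.
    by rewrite /rep mxE ffunE; apply: (hg (i, l)).
  case=> g Hg; exists (rep g); split; first split.
  - by move=> i l; rewrite mxE; apply: (allP hsj); apply: mem_nth.
  - by move=> N; case: (Hg N) => t [Nt [_ h]]; exists t.
  case: (Hg 0%N) => t [_ [h1 h2]].
  apply: close_trans (close_sym h1) _; exact: close_W h2.
have step' : forall p : nat * 'M[F]_(n, k), exists c',
    P p.1 p.2 -> P p.1.+1 c' /\ close p.1 p.2 c'.
  move=> [j c]; have [hP|nP] := pselect (P j c).
    by case: (step j c hP) => c' h; exists c'.
  by exists c.
case: (choice step') => f Hf.
pose c := fix c j := if j is j'.+1 then f (j', c j') else 0.
have Pc : forall j, P j (c j) /\ close j (c j) (c j.+1).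
  elim=> [|j [IH _]].
    have P0 : P 0%N (c 0%N).
      split; first by move=> i l; rewrite mxE vring0.
      move=> N; exists N; split => // i l; rewrite mxE subr0; apply/vringE; exact: hU.
    by split=> //; exact: (proj2 (Hf (0%N, c 0%N) P0)).
  have [h1 _] := Hf (j, c j) IH.
  by split=> //; exact: (proj2 (Hf (j.+1, c j.+1) h1)).
have cauchy : forall q d, close q (c q) (c (q + d)%N).
  move=> q; elim=> [|d IH]; first by rewrite addn0 => i l; rewrite subrr; left.
  apply: close_trans IH _; rewrite addnS; apply: close_W (proj2 (Pc _)).
  exact: leq_addr.
have : forall p : 'I_n * 'I_k, exists L : F, forall e : int, exists N : nat,
    forall q, (N <= q)%N -> vsmall v e (c q p.1 p.2 - L).
  move=> [i l]; apply: Hcomp => e; exists (absz e) => p q hp hq.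
  have he : forall r, (absz e <= r)%N -> e <= r%:Z by move=> r; lia.
  have [pq|qp] := leqP p q.
    have := cauchy p (q - p)%N; rewrite subnKC // => h.
    exact: vsmallW (he _ hp) (h i l).
  have := cauchy q (p - q)%N; rewrite subnKC ?(ltnW qp) // => h.
  by rewrite -opprB; apply: vsmallN; exact: vsmallW (he _ hq) (h i l).
case/fin_all_exists => L HL.
pose w : 'M[F]_(n, k) := \matrix_(i, l) L (i, l).
have cw : forall j, close j (c j) w.
  move=> j i l.
  case: (HL (i, l) j%:Z) => N HN.
  have := HN (maxn N j) (leq_maxl _ _); rewrite mxE /= => h1.
  have := cauchy j (maxn N j - j)%N; rewrite subnKC ?leq_maxr // => h2.
  have -> : c j i l - L (i, l) = (c j i l - c (maxn N j) i l) + (c (maxn N j) i l - L (i, l)) by ring.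
  exact: vsmallD (h2 i l) h1.
exists w; split.
  move=> i l; have := cw 0%N i l => h.
  have c0 : c 0%N i l = 0 by rewrite /= mxE.
  by apply/vringE; have := vsmallN h; rewrite c0 sub0r opprK.
move=> j N; case: (Pc j) => [[_ H] _]; case: (H N) => t [Nt ct].
by exists t; split => //; apply: close_trans ct (cw j).
Qed.


Definition vmx m1 m2 (A : 'M[F]_(m1, m2)) := forall i l, A i l \in vring v.

Lemma vmx_mul m1 m2 m3 (A : 'M[F]_(m1, m2)) (B : 'M[F]_(m2, m3)) :
  vmx A -> vmx B -> vmx (A *m B).
Proof.
move=> hA hB i l; rewrite mxE; apply: (big_ind (fun x => x \in vring v)).
- exact: vring0.
- exact: vringD.
- by move=> j _; apply: vringM.
Qed.

Lemma vmx_add m1 m2 (A B : 'M[F]_(m1, m2)) : vmx A -> vmx B -> vmx (A + B).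
Proof. by move=> hA hB i l; rewrite mxE; apply: vringD. Qed.
Lemma vmx_opp m1 m2 (A : 'M[F]_(m1, m2)) : vmx A -> vmx (- A).
Proof. by move=> hA i l; rewrite mxE; apply: vringN. Qed.
Lemma vmx_scale m1 m2 c (A : 'M[F]_(m1, m2)) : c \in vring v -> vmx A -> vmx (c *: A).
Proof. by move=> hc hA i l; rewrite mxE; apply: vringM. Qed.

Lemma vmx_row m1 m2 (A : 'M[F]_(m1, m2)) i : vmx A -> vmx (row i A).
Proof. by move=> hA i' l; rewrite mxE. Qed.

Lemma vmx_rV m2 (u : 'rV[F]_m2) : vmx u <-> forall i, u 0 i \in vring v.
Proof. by split=> h // i l; rewrite (ord1 i). Qed.

Lemma lattice_mul k m (C : 'M[F]_(k, m)) (u : 'rV_k) : vmx u -> lattice v C (u *m C).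
Proof. by move=> h; exists u; split => //; apply/vmx_rV. Qed.

Lemma lattice_vmx k m (C : 'M[F]_(k, m)) x : lattice v C x -> exists2 u : 'rV_k, vmx u & x = u *m C.
Proof. by case=> u [hu ->]; exists u => //; apply/vmx_rV. Qed.

Lemma entry_bform m1 m2 m (P : 'M[F]_(m1, m)) (G : 'M[F]_m) (Q : 'M[F]_(m2, m)) i l :
  (P *m G *m Q^T) i l = bform G (row i P) (row l Q).
Proof.
rewrite /bform -row_mul !mxE; apply: eq_bigr => j _; rewrite !mxE //.
Qed.

Lemma bform_expand m (G : 'M[F]_m) (x y z z' : 'rV[F]_m) (a : F) :
  bform G (x + a *: z) (y + a *: z') =
  bform G x y + a * (bform G z y + bform G x z' + a * bform G z z').
Proof.
rewrite /bform [(y + _)^T]linearD /= [(a *: z')^T]linearZ /= mulmxDl mulmxDr !mulmxDl.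
rewrite -!scalemxAl -!scalemxAr !mxE; ring.
Qed.

Lemma lat1 n (x : 'rV[F]_n) : lattice v 1%:M x <-> vmx x.
Proof.
split; first by case=> u [hu ->]; rewrite mulmx1; apply/vmx_rV.
by move=> h; exists x; split; [apply/vmx_rV|rewrite mulmx1].
Qed.

Lemma test_lattice n m (G : 'M[F]_m) k (C : 'M[F]_(k, m))
  (Huniv : prim_n_universal v n G C) (t : nat) :
  exists U : 'M[F]_(n, k), [/\ vmx U,
     (U *m C) *m G *m (U *m C)^T = (pi ^+ t)%:M &
     forall a : 'rV_n, vmx a -> forall z, lattice v C z -> a *m (U *m C) = pi *: z ->
        exists2 b : 'rV_n, vmx b & (a - pi *: b) *m (U *m C) = 0].
Proof.
pose G' : 'M[F]_n := (pi ^+ t)%:M.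
have sG' : G'^T = G' by rewrite tr_scalar_mx.
have iG' : integral_lattice v G' 1%:M.
  move=> x y /lat1 hx /lat1 hy; rewrite /bform mul_mx_scalar -scalemxAl mxE.
  apply: vringM; first exact: vringX vringpi.
  by apply: vmx_mul => // i l; rewrite mxE; exact: hy.
have rk : lrank (1%:M : 'M[F]_n) = n by rewrite /lrank mxrank1.
case: (Huniv n G' n 1%:M sG' iG' rk) => f [[fin fadd fscale fform] [N [[N0 NaddN NscN] NM Ndec Nint]]].
have e_lat : forall i, lattice v 1%:M (delta_mx 0 i : 'rV[F]_n).
  move=> i; apply/lat1 => i' l; rewrite mxE.
  by case: (_ && _); rewrite ?mulr1n ?mulr0n; [apply: vring1|apply: vring0].
have : forall i, exists u : 'rV[F]_k, vmx u /\ f (delta_mx 0 i) = u *m C.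
  move=> i; case: (lattice_vmx (fin _ (e_lat i))) => u hu eu; by exists u.
case/fin_all_exists => u hu.
pose U : 'M[F]_(n, k) := \matrix_i u i.
pose X := U *m C.
have rowX : forall i, row i X = f (delta_mx 0 i).
  by move=> i; rewrite row_mul rowK (proj2 (hu i)).
have f0 : f 0 = 0.
  have l0 : lattice v 1%:M (0 : 'rV[F]_n) by apply/lat1 => ? ?; rewrite mxE; apply: vring0.
  have := fadd _ _ l0 l0; rewrite addr0 => h.
  by apply: (addrI (f 0)); rewrite -h addr0.
have flin : forall b, vmx b -> f b = b *m X.
  move=> b hb; rewrite {1}(row_sum_delta b) mulmx_sum_row.
  have : forall r : seq 'I_n,
      lattice v 1%:M (\sum_(i <- r) b 0 i *: delta_mx 0 i) /\
      f (\sum_(i <- r) b 0 i *: delta_mx 0 i) = \sum_(i <- r) b 0 i *: row i X.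
    elim=> [|i r [IHl IHf]].
      rewrite !big_nil; split => //; apply/lat1 => ? ?; rewrite mxE; apply: vring0.
    rewrite !big_cons.
    have li : lattice v 1%:M (b 0 i *: delta_mx 0 i).
      by apply/lat1; apply: vmx_scale; [exact: hb|apply/lat1].
    split; first by apply/lat1; apply: vmx_add; apply/lat1.
    by rewrite fadd // fscale ?IHf ?rowX //; exact: hb.
  by move/(_ (index_enum _)) => [_].
have hU : vmx U.
  by move=> i l; rewrite mxE; apply: (proj1 (hu i)).
exists U; split => //.
  apply/matrixP => i l; rewrite entry_bform !rowX fform //.
  rewrite /bform /G' mul_mx_scalar -scalemxAl trmx_delta mul_delta_mx_cond !mxE.
  by case: (i == l); rewrite ?mulr1n ?mulr0n ?mxE ?mulr1 ?mulr0.
move=> a ha z hz eaz.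
case: (Ndec z hz) => s' [nn [[x' lx' es] Nn ez]].
have hx' : vmx x' by apply/lat1.
exists x' => //.
have hd : vmx (a - pi *: x').
  by apply: vmx_add => //; apply: vmx_opp; apply: vmx_scale => //; apply: vringpi.
have E : f (a - pi *: x') = pi *: nn.
  rewrite flin // mulmxBl -scalemxAl -/X -(flin _ hx') -es eaz ez scalerDr.
  by rewrite addrAC subrr add0r.
rewrite -flin // E; apply: Nint.
  by exists (a - pi *: x'); [apply/lat1|rewrite E].
by apply: NscN => //; apply: vringpi.
Qed.

Lemma close_split n k j (A B : 'M[F]_(n, k)) :
  close j A B -> exists2 R, vmx R & B = A + pi ^+ j *: R.
Proof.
move=> h.
have pj : pi ^+ j != 0 by rewrite expf_neq0.
exists (\matrix_(i, l) ((pi ^+ j)^-1 * (B i l - A i l))).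
  move=> i l; rewrite mxE.
  have := vsmallN (h i l); rewrite opprB => /vsmall_pi [r hr ->].
  by rewrite mulKf.
apply/matrixP => i l; rewrite !mxE mulVKf //; ring.
Qed.

Lemma mx_expand n m (G : 'M[F]_m) (X Z : 'M[F]_(n, m)) (a : F) i l :
  ((X + a *: Z) *m G *m (X + a *: Z)^T) i l =
  (X *m G *m X^T) i l + a * ((Z *m G *m X^T) i l + (X *m G *m Z^T) i l
      + a * (Z *m G *m Z^T) i l).
Proof.
by rewrite !entry_bform !linearD !linearZ /= bform_expand.
Qed.

Lemma main_iso n m (G : 'M[F]_m) k (C : 'M[F]_(k, m))
  (Hint : integral_lattice v G C) (Huniv : prim_n_universal v n G C) :
  exists Y : 'M[F]_(n, m), [/\ (Y <= C)%MS, Y *m G *m Y^T = 0 & \rank Y = n].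
Proof.
have := test_lattice Huniv; case/choice => Uf HU.
have hU : forall t i l, Uf t i l \in vring v by move=> t; case: (HU t).
case: (limit_point hU) => w [hw Hw].
have bf : forall (P Q : 'M[F]_(n, k)) i l, vmx P -> vmx Q ->
    ((P *m C) *m G *m (Q *m C)^T) i l \in vring v.
  move=> P Q i l hP hQ; rewrite entry_bform !row_mul.
  by apply: Hint; apply: lattice_mul; apply: vmx_row.
exists (w *m C); split.
- exact: submxMl.
- apply/matrixP => i l; rewrite [RHS]mxE; apply: vsmall_all => j.
  case: (Hw j j) => t [jt ctw].
  case: (HU t) => hUt XGX _.
  case: (close_split ctw) => R hR ->.
  rewrite mulmxDl -scalemxAl mx_expand XGX mxE.
  apply: vsmallD.
    case: (i == l); rewrite ?mulr1n ?mulr0n; last by left.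
    rewrite -(subnKC jt) exprD; apply: vsmall_pi_mul; exact: vringX vringpi.
  apply: vsmall_pi_mul; apply: vringD; first apply: vringD.
  + exact: bf.
  + exact: bf.
  + by apply: vringM; [apply: vringX; apply: vringpi|exact: bf].
- apply/eqP; change (row_free (w *m C)); rewrite -kermx_eq0; apply/rowV0P => a /sub_kermxP aY.
  have [//|a0] := eqVneq a 0; exfalso.
  have [i1 hi1] : exists i, a 0 i != 0.
    apply: contrapT => H; move/eqP: a0; apply; apply/rowP => i; rewrite mxE.
    by apply/eqP; apply: contrapT => h; apply: H; exists i; apply/negP.
  case: (@arg_minP _ _ _ i1 (fun i => a 0 i != 0) (fun i => v (a 0 i)) hi1) => i0 hi0 hmin.
  pose a' := (a 0 i0)^-1 *: a.
  have ha' : vmx a'.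
    apply/vmx_rV => i; rewrite mxE.
    have [->|ai] := eqVneq (a 0 i) 0; first by rewrite mulr0 vring0.
    apply/vringE; right; rewrite vM ?invr_neq0 // vV //.
    by have := hmin i ai; rewrite addrC subr_ge0.
  have a'i0 : a' 0 i0 = 1 by rewrite mxE mulVf.
  have a'Y : a' *m (w *m C) = 0 by rewrite -scalemxAl aY scaler0.
  case: (Hw 1%N 0%N) => t [_ ctw].
  case: (HU t) => hUt XGX prim.
  case: (close_split ctw) => R hR ew.
  have hz : lattice v C (- (a' *m R) *m C).
    by apply: lattice_mul; apply: vmx_opp; apply: vmx_mul.
  have ez : a' *m (Uf t *m C) = pi *: (- (a' *m R) *m C).
    move: a'Y; rewrite ew mulmxDl mulmxDr -scalemxAl -scalemxAr expr1 => /eqP.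
    rewrite addr_eq0 => /eqP ->.
    by rewrite mulNmx scalerN mulmxA.
  case: (prim a' ha' _ hz ez) => b hb e0.
  have : pi ^+ t *: (a' - pi *: b) = 0.
    by rewrite -mul_mx_scalar -XGX mulmxA mulmxA e0 !mul0mx.
  move/eqP; rewrite scaler_eq0 expf_eq0 (negbTE pi0) andbF /= => /eqP/rowP/(_ i0).
  rewrite !mxE mulVf // => /eqP; rewrite subr_eq0 => /eqP e1.
  have b0 : b 0 i0 != 0 by apply: contra_eq_neq e1 => ->; rewrite mulr0 oner_neq0.
  have := vM pi0 b0; rewrite -e1 v1 vpi.
  have := hb 0 i0; rewrite unfold_in /vring (negbTE b0) /= => hb0.
  lia.
Qed.

End Val.
Lemma isotropic_rank_bound (F : fieldType) m (G : 'M[F]_m) k (C : 'M_(k,m))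
  (Hnd : nondeg_lattice G C) d (W : 'M_(d,m)) :
  (W <= C)%MS -> W *m G *m W^T = 0 -> (2 * \rank W <= \rank C)%N.
Proof.
move=> sWC WGW.
set C' := row_base C.
have eC := eq_row_base C.
have fC : row_free C' := row_base_free C.
set K := C' *m G *m C'^T.
have fK : row_free K.
  rewrite -kermx_eq0; apply/rowV0P => u /sub_kermxP uK.
  have x0 : u *m C' = 0.
    apply: Hnd; first by rewrite -eC submxMl.
    move=> y; rewrite -eC => /submxP [y' ->].
    have -> : bform G (u *m C') (y' *m C') = ((u *m K) *m y'^T) 0 0.
      by rewrite /bform /K trmx_mul !mulmxA.
    by rewrite uK mul0mx mxE.
  by apply/eqP; rewrite -(mulmx_free_eq0 _ fC); apply/eqP.
have sWC' : (W <= C')%MS by rewrite eC.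
set w := W *m pinvmx C'.
have eW : W = w *m C' by rewrite /w mulmxKpV.
have wKw : (w *m K) *m w^T = 0.
  by move: WGW; rewrite eW trmx_mul /K !mulmxA.
have rW : (\rank W <= \rank w)%N by rewrite eW mxrankM_maxl.
have := mxrankS (introT sub_kermxP wKw : (w *m K <= kermx w^T)%MS).
rewrite mxrankMfree // mxrank_ker mxrank_tr.
have := rank_leq_col w.
lia.
Qed.

Unset Implicit Arguments. Set Strict Implicit.

Theorem theorem2p6 (F : fieldType) (v : F -> int)
  (Hloc : nonarch_local_field v) (Hchar : (2%:R : F) != 0)
  (n m : nat) (G : 'M[F]_m) (HG : G^T = G) (k : nat) (C : 'M[F]_(k, m))
  (Hint : integral_lattice v G C) (Hnd : nondeg_lattice G C)
  (Huniv : prim_n_universal v n G C) :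
  (n <= witt_index G C)%N /\ (2 * n <= lrank C)%N.
Proof.
case: Hloc => [[vM vD [pi [pi0 vpi]]] Hcomp Hres].
case: (main_iso vM vD pi0 vpi Hres Hcomp Hint Huniv) => Y [sYC YGY rY].
have nm : (n <= m)%N by rewrite -rY rank_leq_col.
split; last by rewrite /lrank -rY; exact: (isotropic_rank_bound Hnd sYC YGY).
pose P : 'M[F]_(m, n) := pid_mx n.
pose W := P *m Y.
have PtP : P^T *m P = 1%:M.
  by rewrite tr_pid_mx mul_pid_mx minnn (minn_idPr nm) pid_mx_1.
have rW : \rank W = n.
  apply/eqP; rewrite eqn_leq; apply/andP; split.
    by apply: leq_trans (mxrankM_maxr _ _) _; rewrite rY.
  have := mxrankM_maxr P^T W.
  by rewrite /W mulmxA PtP mul1mx rY.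
rewrite /witt_index.
have := @leq_bigmax_cond _ (fun d : 'I_m.+1 => `[< exists W : 'M[F]_m,
          [/\ (W <= C)%MS, W *m G *m W^T = 0 & \rank W = d] >]) (fun d => nat_of_ord d) (inord n).
rewrite inordK ?ltnS //; apply.
apply/asboolP; exists W; split.
- by apply: submx_trans (submxMl _ _) sYC.
- have -> : W *m G *m W^T = P *m (Y *m G *m Y^T) *m P^T.
    by rewrite /W trmx_mul !mulmxA.
  by rewrite YGY mulmx0 mul0mx.
- by rewrite rW.
Qed.
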